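(* Fix a monomial order on $S$. If $J$ is an ideal of $S$ and $(E_i)_{i\in\Lambda}$ is a family of monomial ideals of $S$ such that $(J,E_i)$ is a G-nice pair for all $i\in\Lambda$, then $(J,\sum_{i\in\Lambda}E_i)$ is a G-nice pair.
   Context: $K$ is a field and $S=K[x_1,\ldots,x_n]$ with a fixed monomial order. For $0\neq f\in S$, $\mathrm{in}(f)$ denotes its leading monomial; for an ideal $I$, $\mathrm{in}(I)$ is the ideal generated by the leading monomials of the nonzero elements of $I$. A pair $(J,E)$ of ideals of $S$ is called Gröbner nice (G-nice) if $\mathrm{in}(J+E)=\mathrm{in}(J)+\mathrm{in}(E)$. *)

(* Defs.v *)
From HB Require Import structures.
From mathcomp Require Import all_boot all_order all_algebra.
From mathcomp Require Import mpoly.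
Set Implicit Arguments. Unset Strict Implicit. Unset Printing Implicit Defensive.
Import GRing.Theory.
Local Open Scope ring_scope.

(* Monomials of S = K[x_1,...,x_n] are the multinomials 'X_{1..n}
   (exponent vectors); the monomial with exponent m is 'X_[m]. *)

Record monomial_order (n : nat) (le : 'X_{1..n} -> 'X_{1..n} -> Prop) : Prop := {
  mo_refl  : forall m, le m m;
  mo_anti  : forall m1 m2, le m1 m2 -> le m2 m1 -> m1 = m2;
  mo_trans : forall m1 m2 m3, le m1 m2 -> le m2 m3 -> le m1 m3;
  mo_total : forall m1 m2, le m1 m2 \/ le m2 m1;
  mo_mul   : forall m1 m2 m, le m1 m2 -> le (m1 + m)%MM (m2 + m)%MM;
  mo_wf    : well_founded (fun m1 m2 => le m1 m2 /\ m1 <> m2)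
}.

Definition is_lead (K : fieldType) (n : nat) (le : 'X_{1..n} -> 'X_{1..n} -> Prop)
  (f : {mpoly K[n]}) (m : 'X_{1..n}) : Prop :=
  m \in msupp f /\ forall m', m' \in msupp f -> le m' m.

Definition is_ideal (K : fieldType) (n : nat) (I : {mpoly K[n]} -> Prop) : Prop :=
  [/\ I 0,
      forall f g, I f -> I g -> I (f + g)
    & forall f g, I g -> I (f * g)].

Definition ideal_gen (K : fieldType) (n : nat) (G : {mpoly K[n]} -> Prop)
  : {mpoly K[n]} -> Prop :=
  fun f => exists s : seq ({mpoly K[n]} * {mpoly K[n]}),
    (forall pq, pq \in s -> G pq.2) /\ f = \sum_(pq <- s) pq.1 * pq.2.

Definition is_monomial_ideal (K : fieldType) (n : nat) (E : {mpoly K[n]} -> Prop)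
  : Prop :=
  is_ideal E /\ exists M : 'X_{1..n} -> Prop,
    forall f, E f <-> ideal_gen (fun g => exists m, M m /\ g = 'X_[m]) f.

Definition ideal_add (K : fieldType) (n : nat) (I J : {mpoly K[n]} -> Prop) :=
  ideal_gen (fun f => I f \/ J f).

Definition ideal_bigsum (K : fieldType) (n : nat) (L : Type)
  (E : L -> {mpoly K[n]} -> Prop) :=
  ideal_gen (fun f => exists i, E i f).

Definition init_ideal (K : fieldType) (n : nat) (le : 'X_{1..n} -> 'X_{1..n} -> Prop)
  (I : {mpoly K[n]} -> Prop) : {mpoly K[n]} -> Prop :=
  ideal_gen (fun g => exists f m, [/\ I f, f != 0, is_lead le f m & g = 'X_[m]]).

Definition gnice (K : fieldType) (n : nat) (le : 'X_{1..n} -> 'X_{1..n} -> Prop)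
  (J E : {mpoly K[n]} -> Prop) : Prop :=
  forall f, init_ideal le (ideal_add J E) f <->
            ideal_add (init_ideal le J) (init_ideal le E) f.

(* Main.v *)
Require Import Defs.
From mathcomp Require Import all_boot all_order all_algebra.
From mathcomp Require Import mpoly.
From mathcomp Require Import ring.
From Stdlib Require Import ClassicalEpsilon Classical.
Set Implicit Arguments. Unset Strict Implicit. Unset Printing Implicit Defensive.
Import GRing.Theory.
Local Open Scope ring_scope.

Lemma ideal_gen_in (K : fieldType) (n : nat) (G : {mpoly K[n]} -> Prop) g :
  G g -> ideal_gen G g.
Proof. by move=> Gg; exists [:: (1, g)]; split; [move=> pq; rewrite inE => /eqP -> | rewrite big_seq1 mul1r]. Qed.

Lemma ideal_gen_ideal (K : fieldType) (n : nat) (G : {mpoly K[n]} -> Prop) :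
  is_ideal (ideal_gen G).
Proof.
split.
- by exists [::]; rewrite big_nil.
- move=> f g [s [Hs ->]] [t [Ht ->]]; exists (s ++ t); split; last by rewrite big_cat.
  by move=> pq; rewrite mem_cat => /orP [/Hs|/Ht].
- move=> f g [s [Hs ->]]; exists [seq (f * pq.1, pq.2) | pq <- s]; split.
    by move=> pq /mapP [pq' /Hs H ->].
  by rewrite big_map mulr_sumr; apply: eq_bigr => pq _; rewrite mulrA.
Qed.

Lemma ideal_gen_min (K : fieldType) (n : nat) (G P : {mpoly K[n]} -> Prop) :
  is_ideal P -> (forall g, G g -> P g) -> forall f, ideal_gen G f -> P f.
Proof.
move=> [P0 PD PM] GP f [s [Hs ->]]; elim: s Hs => [|pq s IH] Hs; first by rewrite big_nil.
rewrite big_cons; apply: PD; first by apply: PM; apply: GP; apply: Hs; rewrite inE eqxx.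
by apply: IH => x xs; apply: Hs; rewrite inE xs orbT.
Qed.

Lemma ideal_sub (K : fieldType) (n : nat) (I : {mpoly K[n]} -> Prop) f g :
  is_ideal I -> I f -> I g -> I (f - g).
Proof.
move=> [I0 ID IM] If Ig; apply: ID => //; rewrite -mulN1r; exact: IM.
Qed.

Lemma ideal_scale (K : fieldType) (n : nat) (I : {mpoly K[n]} -> Prop) c f :
  is_ideal I -> I f -> I (c *: f).
Proof. by move=> [I0 ID IM] If; rewrite -mul_mpolyC; apply: IM. Qed.

Definition Supp (K : fieldType) (n : nat) (U : 'X_{1..n} -> Prop) (p : {mpoly K[n]}) :=
  forall m, m \in msupp p -> U m.

Lemma Supp_ideal (K : fieldType) (n : nat) (U : 'X_{1..n} -> Prop) :
  (forall m k, U m -> U (m + k)%MM) -> is_ideal (Supp (K:=K) U).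
Proof.
move=> Uup; split.
- by move=> m; rewrite msupp0.
- move=> f g Hf Hg m /msuppD_le; rewrite mem_cat => /orP [/Hf|/Hg] //.
- move=> f g Hg m /msuppM_le /allpairsP [[m1 m2] /= [_ /Hg H ->]].
  by rewrite addmC; apply: Uup.
Qed.

Definition pb (P : Prop) : bool := if excluded_middle_informative P then true else false.
Lemma pbP P : reflect P (pb P).
Proof. by rewrite /pb; case: excluded_middle_informative => H; constructor. Qed.

Definition res (K : fieldType) (n : nat) (U : 'X_{1..n} -> Prop) (p : {mpoly K[n]}) :=
  \sum_(m <- msupp p) ((if pb (U m) then p@_m else 0) *: 'X_[m]).

Lemma sum_pred1_seq (T : eqType) (R : nmodType) (s : seq T) (F : T -> R) x :
  uniq s -> \sum_(y <- s | y == x) F y = if x \in s then F x else 0.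
Proof.
elim: s => [|y s IH] /=; first by rewrite big_nil.
move=> /andP [ys us]; rewrite big_cons IH // inE.
case: (eqVneq y x) => [<-|neq] //=.
by rewrite (negbTE ys) addr0.

Qed.

Lemma res_coef (K : fieldType) (n : nat) (U : 'X_{1..n} -> Prop) (p : {mpoly K[n]}) m :
  (res U p)@_m = if pb (U m) then p@_m else 0.
Proof.
rewrite /res raddf_sum /=.
transitivity (\sum_(m' <- msupp p | m' == m) (if pb (U m') then p@_m' else 0)).
  rewrite [RHS]big_mkcond /=; apply: eq_bigr => m' _.
  by rewrite /= mcoeffZ mcoeffX; case: eqP => [->|]; rewrite ?mulr1 ?mulr0.
rewrite sum_pred1_seq ?msupp_uniq //.
case: ifP => // /negbT; rewrite -mcoeff_eq0 => /eqP ->; by case: pb.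
Qed.

Definition Dset (n : nat) (M : 'X_{1..n} -> Prop) (m : 'X_{1..n}) :=
  exists m0 k, M m0 /\ m = (m0 + k)%MM.

Definition LM (K : fieldType) (n : nat) (le : 'X_{1..n} -> 'X_{1..n} -> Prop)
  (I : {mpoly K[n]} -> Prop) (m : 'X_{1..n}) :=
  exists f, [/\ I f, f != 0 & is_lead le f m].

Definition NF (K : fieldType) (n : nat) (le : 'X_{1..n} -> 'X_{1..n} -> Prop)
  (J : {mpoly K[n]} -> Prop) (p r : {mpoly K[n]}) :=
  J (p - r) /\ forall m, m \in msupp r -> ~ Dset (LM le J) m.

Lemma seq_max (n : nat) (le : 'X_{1..n} -> 'X_{1..n} -> Prop) (s : seq 'X_{1..n}) :
  monomial_order le -> s != [::] -> exists m, m \in s /\ forall m', m' \in s -> le m' m.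
Proof.
move=> Hle; elim: s => [|x s IH] //= _.
case: (eqVneq s [::]) => [->|/IH [m [ms Hm]]].
  by exists x; split; rewrite ?inE ?eqxx // => m'; rewrite inE => /eqP ->; apply: mo_refl.
case: (mo_total Hle x m) => H.
  exists m; split; first by rewrite inE ms orbT.
  by move=> m'; rewrite inE => /orP [/eqP ->|/Hm].
exists x; split; first by rewrite inE eqxx.
move=> m'; rewrite inE => /orP [/eqP ->|/Hm H']; first exact: mo_refl.
exact: mo_trans H' H.
Qed.

Lemma lead_exists (K : fieldType) (n : nat) (le : 'X_{1..n} -> 'X_{1..n} -> Prop)
  (p : {mpoly K[n]}) : monomial_order le -> p != 0 -> exists m, is_lead le p m.
Proof.
move=> Hle pn0; have : msupp p != [::] by rewrite msupp_eq0.
by move/(seq_max Hle) => [m [H1 H2]]; exists m.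
Qed.

Lemma lead_unique (K : fieldType) (n : nat) (le : 'X_{1..n} -> 'X_{1..n} -> Prop)
  (p : {mpoly K[n]}) m1 m2 : monomial_order le -> is_lead le p m1 -> is_lead le p m2 -> m1 = m2.
Proof.
move=> Hle [H1 H1'] [H2 H2']; apply: (mo_anti Hle); [exact: H2' | exact: H1'].
Qed.

Lemma lead_mulX (K : fieldType) (n : nat) (le : 'X_{1..n} -> 'X_{1..n} -> Prop)
  (g : {mpoly K[n]}) m k : monomial_order le -> is_lead le g m ->
  is_lead le (g * 'X_[k]) (k + m)%MM.
Proof.
move=> Hle [Hm Hm']; rewrite /is_lead !(perm_mem (msuppMX g k)); split.
  by apply/mapP; exists m.
move=> m'; rewrite (perm_mem (msuppMX g k)) => /mapP [m'' /Hm' H ->]; rewrite ![(k + _)%MM]addmC; exact: mo_mul.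
Qed.

Lemma NF_unique (K : fieldType) (n : nat) (le : 'X_{1..n} -> 'X_{1..n} -> Prop)
  (J : {mpoly K[n]} -> Prop) p r1 r2 :
  monomial_order le -> is_ideal J -> NF le J p r1 -> NF le J p r2 -> r1 = r2.
Proof.
move=> Hle HJ [J1 N1] [J2 N2]; apply/eqP; rewrite -subr_eq0; apply/negPn/negP => nz.
have [w lw] := lead_exists Hle nz.
have Jd : J (r1 - r2).
  have -> : r1 - r2 = (p - r2) - (p - r1) by ring.
  exact: ideal_sub.
have Dw : Dset (LM le J) w by exists w, 0%MM; rewrite addm0; split => //; exists (r1 - r2).
case: lw => /msuppB_le; rewrite mem_cat => /orP [/N1|/N2] //.
Qed.

Lemma NF_add (K : fieldType) (n : nat) (le : 'X_{1..n} -> 'X_{1..n} -> Prop)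
  (J : {mpoly K[n]} -> Prop) p1 p2 r1 r2 :
  is_ideal J -> NF le J p1 r1 -> NF le J p2 r2 -> NF le J (p1 + p2) (r1 + r2).
Proof.
move=> HJ [J1 N1] [J2 N2]; split.
  have -> : p1 + p2 - (r1 + r2) = (p1 - r1) + (p2 - r2) by rewrite opprD addrACA.
  by case: HJ => _ HD _; apply: HD.
by move=> m /msuppD_le; rewrite mem_cat => /orP [/N1|/N2].
Qed.

Lemma NF_exists_bounded (K : fieldType) (n : nat) (le : 'X_{1..n} -> 'X_{1..n} -> Prop)
  (J : {mpoly K[n]} -> Prop) :
  monomial_order le -> is_ideal J ->
  forall w p, p != 0 -> is_lead le p w ->
  exists r, NF le J p r /\ forall m, m \in msupp r -> le m w.
Proof.
move=> Hle HJ w; elim/(well_founded_ind (mo_wf Hle)): w => w IH p pn0 [wp Hw].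
have step : forall p', p'@_w = 0 -> (forall m, m \in msupp p' -> le m w) ->
    exists r', NF le J p' r' /\ forall m, m \in msupp r' -> le m w.
  move=> p' p'w Hp'; case: (eqVneq p' 0) => [->|p'n0].
    exists 0; split; last by move=> m; rewrite msupp0.
    split; first by rewrite subr0; case: HJ.
    by move=> m; rewrite msupp0.
  have [w' lw'] := lead_exists Hle p'n0.
  have lew' : le w' w by apply: Hp'; case: lw'.
  have nw' : w' <> w by move=> E; case: lw'; rewrite mcoeff_msupp E p'w eqxx.
  have [r' [N' B']] := IH w' (conj lew' nw') p' p'n0 lw'.
  exists r'; split => // m /B' H; exact: mo_trans H lew'.
set c := p@_w; have cn0 : c != 0 by rewrite /c -mcoeff_msupp.
case: (pbP (Dset (LM le J) w)) => [[m0 [k [[g [Jg gn0 lg]] Ew]]]|nD].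
- set q := g * 'X_[k].
  have lq : is_lead le q w by rewrite Ew addmC; apply: lead_mulX.
  set d := q@_w; have dn0 : d != 0 by rewrite /d -mcoeff_msupp; case: lq.
  set p' := p - (c / d) *: q.
  have Jq : J q by rewrite /q mulrC; case: HJ => _ _ HM; apply: HM.
  have [r' [[Jr' Nr'] Br']] : exists r', NF le J p' r' /\ forall m, m \in msupp r' -> le m w.
    apply: step.
      by rewrite /p' mcoeffB mcoeffZ -/d -/c divfK // subrr.
    move=> m /msuppB_le; rewrite mem_cat => /orP [/Hw //|/msuppZ_le].
    by case: lq => _; apply.
  exists r'; split; last by []. split; last exact: Nr'.
  have -> : p - r' = (p' - r') + (c / d) *: q by rewrite /p'; ring.
  by case: (HJ) => _ HD _; apply: HD => //; apply: ideal_scale.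
- set s := c *: ('X_[w] : {mpoly K[n]}).
  have ss : msupp s = [:: w] by rewrite msuppMCX.
  set p' := p - s.
  have [r' [[Jr' Nr'] Br']] : exists r', NF le J p' r' /\ forall m, m \in msupp r' -> le m w.
    apply: step.
      by rewrite /p' mcoeffB mcoeffZ mcoeffX eqxx mulr1 subrr.
    move=> m /msuppB_le; rewrite mem_cat ss inE => /orP [/Hw //|/eqP ->]; exact: mo_refl.
  exists (r' + s); split; first split.
  + by have -> : p - (r' + s) = p' - r' by rewrite /p' opprD addrAC addrA.
  + by move=> m /msuppD_le; rewrite mem_cat ss inE => /orP [/Nr'|/eqP ->].
  + by move=> m /msuppD_le; rewrite mem_cat ss inE => /orP [/Br'|/eqP ->] //; exact: mo_refl.
Qed.

Lemma NF_exists (K : fieldType) (n : nat) (le : 'X_{1..n} -> 'X_{1..n} -> Prop)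
  (J : {mpoly K[n]} -> Prop) p :
  monomial_order le -> is_ideal J -> exists r, NF le J p r.
Proof.
move=> Hle HJ; case: (eqVneq p 0) => [->|pn0].
  exists 0; split; first by rewrite subr0; case: HJ.
  by move=> m; rewrite msupp0.
have [w lw] := lead_exists Hle pn0.
by have [r [? _]] := NF_exists_bounded Hle HJ pn0 lw; exists r.
Qed.

Lemma X_neq0 (K : fieldType) (n : nat) (m : 'X_{1..n}) : ('X_[m] : {mpoly K[n]}) != 0.
Proof. by rewrite -msupp_eq0 msuppX. Qed.

Lemma X_lead (K : fieldType) (n : nat) (le : 'X_{1..n} -> 'X_{1..n} -> Prop) (m : 'X_{1..n}) :
  monomial_order le -> is_lead le ('X_[m] : {mpoly K[n]}) m.
Proof.
move=> Hle; rewrite /is_lead msuppX inE eqxx; split => // m'; rewrite inE => /eqP ->.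
exact: mo_refl.
Qed.

Lemma mono_supp (K : fieldType) (n : nat) (E : {mpoly K[n]} -> Prop) p :
  is_monomial_ideal E -> E p -> forall m, m \in msupp p -> E 'X_[m].
Proof.
move=> [HE [M HM]] /HM Hp.
have : Supp (Dset M) p.
  apply: (ideal_gen_min _ _ Hp).
    apply: Supp_ideal => m k [m0 [k0 [H ->]]]; exists m0, (k0 + k)%MM; split => //.
    by rewrite addmA.
  move=> g [m [Mm ->]] m'; rewrite msuppX inE => /eqP ->.
  by exists m, 0%MM; rewrite addm0.
move=> HS m mp; have [m0 [k [Mm0 ->]]] := HS m mp; apply/HM.
rewrite mpolyXD mulrC; have [_ _ HMul] := @ideal_gen_ideal K n (fun g => exists m, M m /\ g = 'X_[m]).
by apply: HMul; apply: ideal_gen_in; exists m0.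
Qed.

Lemma res_in (K : fieldType) (n : nat) (E : {mpoly K[n]} -> Prop) r :
  is_ideal E -> E (res (fun m => E 'X_[m]) r).
Proof.
move=> HE; rewrite /res; apply: (big_ind E).
- by case: HE.
- by case: HE => _ HD _; apply: HD.
- move=> m _; case: pbP => H; first exact: ideal_scale.
  by rewrite scale0r; case: HE.
Qed.

Lemma nice_use (K : fieldType) (n : nat) (le : 'X_{1..n} -> 'X_{1..n} -> Prop)
  (J E : {mpoly K[n]} -> Prop) u :
  monomial_order le -> is_ideal J -> is_monomial_ideal E -> gnice le J E ->
  LM le (ideal_add J E) u -> Dset (LM le J) u \/ E 'X_[u].
Proof.
move=> Hle HJ HEm Hn [f [Hf fn0 lf]].
have HE : is_ideal E by case: HEm.
have H1 : init_ideal le (ideal_add J E) 'X_[u].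
  by apply: ideal_gen_in; exists f, u; split.
move/Hn: H1 => H2.
set U := fun m => Dset (LM le J) m \/ E 'X_[m].
have HU : is_ideal (Supp (K:=K) U).
  apply: Supp_ideal => m k [[m0 [k0 [H ->]]]|H].
    by left; exists m0, (k0 + k)%MM; split => //; rewrite addmA.
  by right; rewrite mpolyXD mulrC; case: HE => _ _; apply.
have : Supp (K:=K) U 'X_[u].
  apply: (@ideal_gen_min K n (fun f => init_ideal le J f \/ init_ideal le E f) _ HU _ _ H2) => g [Hg|Hg].
    apply: (ideal_gen_min HU _ Hg) => g' [f' [m [Jf' f'n0 lf' ->]]] m'.
    rewrite msuppX inE => /eqP ->; left; exists m, 0%MM; rewrite addm0; split => //.
    by exists f'.
  apply: (ideal_gen_min HU _ Hg) => g' [f' [m [Ef' f'n0 lf' ->]]] m'.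
  rewrite msuppX inE => /eqP ->; right; apply: (mono_supp HEm Ef'); by case: lf'.
by apply; rewrite msuppX inE.
Qed.

Lemma NF_in_E (K : fieldType) (n : nat) (le : 'X_{1..n} -> 'X_{1..n} -> Prop)
  (J E : {mpoly K[n]} -> Prop) a r :
  monomial_order le -> is_ideal J -> is_monomial_ideal E -> gnice le J E ->
  E a -> NF le J a r -> forall m, m \in msupp r -> E 'X_[m].
Proof.
move=> Hle HJ HEm Hn Ea [Jar Nr].
have HE : is_ideal E by case: HEm.
set V := fun m => E 'X_[m].
set r' := r - res V r.
have r'0 : r' = 0.
  apply/eqP/negPn/negP => nz.
  have [v lv] := lead_exists Hle nz.
  have Hr' : ideal_add J E r'.
    have -> : r' = (- (a - r)) + (a - res V r) by rewrite /r'; ring.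
    case: (ideal_gen_ideal (fun f => J f \/ E f)) => _ HD _; apply: HD.
      by apply: ideal_gen_in; left; rewrite -mulN1r; case: HJ => _ _; apply.
    by apply: ideal_gen_in; right; apply: ideal_sub => //; apply: res_in.
  have [HD|HV] := nice_use Hle HJ HEm Hn (ex_intro _ r' (And3 Hr' nz lv)).
    case: lv => vs _; move: vs; rewrite mcoeff_msupp /r' mcoeffB res_coef.
    case: pbP => _; first by rewrite subrr eqxx.
    by rewrite subr0 -mcoeff_msupp => /Nr.
  case: lv => vs _; move: vs; rewrite mcoeff_msupp /r' mcoeffB res_coef.
  by case: pbP => // _; rewrite subrr eqxx.
move=> m; rewrite mcoeff_msupp; move/eqP: r'0; rewrite subr_eq0 => /eqP {1}->.
by rewrite res_coef; case: pbP => // _; rewrite eqxx.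
Qed.

Definition QV (K : fieldType) (n : nat) (le : 'X_{1..n} -> 'X_{1..n} -> Prop)
  (J : {mpoly K[n]} -> Prop) (L : Type) (E : L -> {mpoly K[n]} -> Prop) p :=
  exists r, NF le J p r /\ forall m, m \in msupp r -> exists i, E i 'X_[m].

Lemma QV_sum (K : fieldType) (n : nat) (le : 'X_{1..n} -> 'X_{1..n} -> Prop)
  (J : {mpoly K[n]} -> Prop) (L : Type) (E : L -> {mpoly K[n]} -> Prop)
  (s : seq ({mpoly K[n]} * {mpoly K[n]})) :
  is_ideal J -> (forall pq, pq \in s -> QV le J E (pq.1 * pq.2)) ->
  QV le J E (\sum_(pq <- s) pq.1 * pq.2).
Proof.
move=> HJ; elim: s => [|pq s IH] Hs.
  rewrite big_nil; exists 0; split; last by move=> m; rewrite msupp0.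
  split; first by rewrite subr0; case: HJ.
  by move=> m; rewrite msupp0.
rewrite big_cons.
have [r1 [N1 H1]] := Hs pq (mem_head _ _).
have [r2 [N2 H2]] : QV le J E (\sum_(pq <- s) pq.1 * pq.2).
  by apply: IH => x xs; apply: Hs; rewrite inE xs orbT.
exists (r1 + r2); split; first exact: NF_add.
by move=> m /msuppD_le; rewrite mem_cat => /orP [/H1|/H2].
Qed.

Lemma QV_E (K : fieldType) (n : nat) (le : 'X_{1..n} -> 'X_{1..n} -> Prop)
  (J : {mpoly K[n]} -> Prop) (L : Type) (E : L -> {mpoly K[n]} -> Prop) i p :
  monomial_order le -> is_ideal J -> is_monomial_ideal (E i) -> gnice le J (E i) ->
  E i p -> QV le J E p.
Proof.
move=> Hle HJ HEm Hn Ep; have [r Nr] := NF_exists p Hle HJ.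
exists r; split => // m ms; exists i; exact: (NF_in_E Hle HJ HEm Hn Ep Nr).
Qed.

Lemma QV_all (K : fieldType) (n : nat) (le : 'X_{1..n} -> 'X_{1..n} -> Prop)
  (J : {mpoly K[n]} -> Prop) (L : Type) (E : L -> {mpoly K[n]} -> Prop) f :
  monomial_order le -> is_ideal J -> (forall i, is_monomial_ideal (E i)) ->
  (forall i, gnice le J (E i)) ->
  ideal_add J (ideal_bigsum E) f -> QV le J E f.
Proof.
move=> Hle HJ HE Hn [s [Hs ->]]; apply: (@QV_sum K n le J L E s HJ) => pq /Hs [Jq|[t [Ht ->]]].
  exists 0; split; last by move=> m; rewrite msupp0.
  split; last by move=> m; rewrite msupp0.
  by rewrite subr0; case: HJ => _ _; apply.
have -> : pq.1 * (\sum_(y <- t) y.1 * y.2) =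
    \sum_(x <- [seq (pq.1 * y.1, y.2) | y <- t]) x.1 * x.2.
  by rewrite big_map mulr_sumr; apply: eq_bigr => y _; rewrite mulrA.
apply: (@QV_sum K n le J L E _ HJ) => x /mapP [y /Ht [i Ei] ->] /=.
apply: (QV_E (i := i)) => //.
by case: (HE i) => [[_ _ HM] _]; apply: HM.
Qed.

Lemma core (K : fieldType) (n : nat) (le : 'X_{1..n} -> 'X_{1..n} -> Prop)
  (J : {mpoly K[n]} -> Prop) (L : Type) (E : L -> {mpoly K[n]} -> Prop) u :
  monomial_order le -> is_ideal J -> (forall i, is_monomial_ideal (E i)) ->
  (forall i, gnice le J (E i)) ->
  LM le (ideal_add J (ideal_bigsum E)) u ->
  Dset (LM le J) u \/ exists i, E i 'X_[u].
Proof.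
move=> Hle HJ HE Hn [f [Hf fn0 [us Hu]]].
apply: NNPP => /not_or_and [nD nV].
have [r [Nr Vr]] := QV_all Hle HJ HE Hn Hf.
set c := f@_u; have cn0 : c != 0 by rewrite /c -mcoeff_msupp.
set s := c *: ('X_[u] : {mpoly K[n]}).
have ss : msupp s = [:: u] by rewrite msuppMCX.
set p := f - s.
have [r0 [N0 B0]] : exists r0, NF le J p r0 /\ r0@_u = 0.
  case: (eqVneq p 0) => [->|pn0].
    exists 0; split; last by rewrite mcoeff0.
    split; first by rewrite subr0; case: HJ.
    by move=> m; rewrite msupp0.
  have [w lw] := lead_exists Hle pn0.
  have [r0 [N0 B0]] := NF_exists_bounded Hle HJ pn0 lw.
  exists r0; split => //.
  have pu : p@_u = 0 by rewrite /p mcoeffB mcoeffZ mcoeffX eqxx mulr1 subrr.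
  case: lw => ws Hw.
  have wu : w <> u by move=> E'; move: ws; rewrite mcoeff_msupp E' pu eqxx.
  have lwu : le w u.
    move: ws => /msuppB_le; rewrite mem_cat ss inE => /orP [/Hu //|/eqP E']; by [].
  apply/eqP; rewrite mcoeff_eq0; apply/negP => /B0 luw.
  by apply: wu; apply: (mo_anti Hle).
have Nf : NF le J f (r0 + s).
  case: N0 => J0 N0'; split.
    by have -> : f - (r0 + s) = p - r0 by rewrite /p; ring.
  by move=> m /msuppD_le; rewrite mem_cat ss inE => /orP [/N0'|/eqP ->].
have Er := NF_unique Hle HJ Nr Nf.
apply: nV; apply: Vr; rewrite Er mcoeff_msupp mcoeffD B0 add0r.
by rewrite /s mcoeffZ mcoeffX eqxx mulr1.
Qed.

Theorem mainTheorem8 (K : fieldType) (n : nat)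
  (le : 'X_{1..n} -> 'X_{1..n} -> Prop) (Hle : monomial_order le)
  (J : {mpoly K[n]} -> Prop) (HJ : is_ideal J)
  (L : Type) (E : L -> {mpoly K[n]} -> Prop)
  (HE : forall i, is_monomial_ideal (E i))
  (Hnice : forall i, gnice le J (E i)) :
  gnice le J (ideal_bigsum E).
Proof.
move=> f; split.
- apply: ideal_gen_min; first exact: ideal_gen_ideal.
  move=> g [f0 [u [Hf0 f0n0 lf0 ->]]].
  have [[m0 [k [[g0 [Jg0 g0n0 lg0]] ->]]]|[i Ei]] :=
    core Hle HJ HE Hnice (ex_intro _ f0 (And3 Hf0 f0n0 lf0)).
  + apply: ideal_gen_in; left.
    rewrite mpolyXD mulrC; have [_ _ HM] := @ideal_gen_ideal K n
      (fun g => exists f m, [/\ J f, f != 0, is_lead le f m & g = 'X_[m]]).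
    by apply: HM; apply: ideal_gen_in; exists g0, m0.
  + apply: ideal_gen_in; right; apply: ideal_gen_in; exists 'X_[u], u; split.
    * by apply: ideal_gen_in; exists i.
    * exact: X_neq0.
    * exact: X_lead.
    * by [].
- apply: ideal_gen_min; first exact: ideal_gen_ideal.
  move=> g [Hg|Hg].
  + apply: (ideal_gen_min _ _ Hg); first exact: ideal_gen_ideal.
    move=> g' [f0 [m [Jf0 f0n0 lf0 ->]]]; apply: ideal_gen_in; exists f0, m; split => //.
    by apply: ideal_gen_in; left.
  + apply: (ideal_gen_min _ _ Hg); first exact: ideal_gen_ideal.
    move=> g' [f0 [m [Ef0 f0n0 lf0 ->]]]; apply: ideal_gen_in; exists f0, m; split => //.
    by apply: ideal_gen_in; right.
Qed.
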